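(* Let $M\subset\bigoplus_{i=1}^rA[-\delta_i]$ be a graded right $A$-submodule and $M'=L(M)$. For every $d\ge0$, $\iota(M_d)=M'(d)_d$, where $M'(d)=M'\cap\bigoplus_iS(\delta_i,d)[-\delta_i]$ (the set of elements $\sum_ie'_ih_i$ of $M'$ with $h_i\in S(\delta_i,d)$). In particular $\dim_{\mathbb K}M_d=\dim_{\mathbb K}M'(d)_d$.
   Context: Let $\mathbb K$ be a field, $F=\mathbb K\langle x_1,\dots,x_n\rangle$ with standard grading, $I\subset F$ a graded two-sided ideal, $A=F/I$, $A[-\delta]_d=A_{d-\delta}$, $\bigoplus_{i=1}^rA[-\delta_i]$ the graded free right $A$-module with basis $e_i$ of degree $\delta_i$. Let $P=\mathbb K[x_{ij}\mid1\le i\le n,j\ge1]$ (commutative, $\deg x_{ij}=1$), $Q$ the ideal generated by all $x_{ij}x_{kj}$, $R=P/Q$, $\sigma:x_{ij}\mapsto x_{i,j+1}$, $\iota:F\to R$ the $\mathbb K$-linear map $x_{i_1}\cdots x_{i_d}\mapsto x_{i_11}\cdots x_{i_dd}$, $J$ the ideal of $R$ generated by $\bigcup_{k\ge0}\sigma^k(\iota(I))$, $S=R/J$ (with induced $\sigma$ and induced injective graded linear $\iota:A\to S$). For integers $0\le\delta\le d$, $S(\delta,d)$ is the subalgebra of $S$ generated by the cosets of $x_{ij}$ with $1\le i\le n$, $\delta<j\le d$. $\bigoplus_iS[-\delta_i]$ is the graded free $S$-module with basis $e'_i$ of degree $\delta_i$, and $\iota:\bigoplus_iA[-\delta_i]\to\bigoplus_iS[-\delta_i]$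 is the $\mathbb K$-linear map $e_if\mapsto e'_i\sigma^{\delta_i}(\iota(f))$. For a graded right submodule $M$, its letterplace analogue $L(M)$ is the $S$-submodule of $\bigoplus_iS[-\delta_i]$ generated by $\iota(M)$. *)

(* Defs.v *)
From HB Require Import structures.
From mathcomp Require Import all_boot all_order all_algebra.
Set Implicit Arguments. Unset Strict Implicit. Unset Printing Implicit Defensive.
Import GRing.Theory.
Local Open Scope ring_scope.

(* K-vector spaces on a monomial basis T, i.e. coefficient functions). *)
Section FunOps.
Variables (K : fieldType) (T : Type).
Definition fzero : T -> K := fun _ => 0.
Definition fadd (f g : T -> K) : T -> K := fun t => f t + g t.
Definition fsub (f g : T -> K) : T -> K := fun t => f t - g t.
Definition fscale (c : K) (f : T -> K) : T -> K := fun t => c * f t.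
End FunOps.

Definition fin_supp (K : fieldType) (T : eqType) (P : pred T) (f : T -> K) :=
  exists s : seq T, forall t, f t != 0 -> (t \in s) && P t.

(* Vectors with r components (elements of free modules with basis e_i). *)
Section VecOps.
Variables (K : fieldType) (T : Type) (r : nat).
Definition vzero : 'I_r -> T -> K := fun _ => @fzero K T.
Definition vadd (u v : 'I_r -> T -> K) : 'I_r -> T -> K := fun i => fadd (u i) (v i).
Definition vsub (u v : 'I_r -> T -> K) : 'I_r -> T -> K := fun i => fsub (u i) (v i).
Definition vscale (c : K) (u : 'I_r -> T -> K) : 'I_r -> T -> K :=
  fun i => fscale c (u i).
Definition lcomb (k : nat) (c : 'I_k -> K) (b : 'I_k -> 'I_r -> T -> K)
  : 'I_r -> T -> K := fun i t => \sum_(j < k) c j * b j i t.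
(* dim_K (U / W) = k, for subspaces W <= U : a basis of U modulo W of size k *)
Definition qdim (U W : ('I_r -> T -> K) -> Prop) (k : nat) : Prop :=
  exists b : 'I_k -> 'I_r -> T -> K,
    (forall j, U (b j)) /\
    (forall c : 'I_k -> K, W (lcomb c b) -> forall j, c j = 0) /\
    (forall u, U u -> exists c : 'I_k -> K, W (vsub u (lcomb c b))).
End VecOps.

(* The free associative algebra F = K<x_1..x_n>: K-basis = words.      *)
Section FreeAlg.
Variables (K : fieldType) (n : nat).
Definition word := seq 'I_n.
Definition Fpoly := word -> K.
Definition is_Fpoly (f : Fpoly) := fin_supp predT f.
Definition mulF (f g : Fpoly) : Fpoly :=
  fun w => \sum_(k < (size w).+1) f (take k w) * g (drop k w).
Definition hpartF (k : nat) (f : Fpoly) : Fpoly :=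
  fun w => if size w == k then f w else 0.

Record graded_twosided_ideal (I : Fpoly -> Prop) : Prop := {
  gi_poly : forall f, I f -> is_Fpoly f;
  gi_zero : I (@fzero K word);
  gi_add : forall f g, I f -> I g -> I (fadd f g);
  gi_scale : forall c f, I f -> I (fscale c f);
  gi_lmul : forall f g, is_Fpoly g -> I f -> I (mulF g f);
  gi_rmul : forall f g, is_Fpoly g -> I f -> I (mulF f g);
  gi_graded : forall f k, I f -> I (hpartF k f) }.

(* Elements of F^r, with basis vector e_i of degree delta_i. *)
Definition Fvec (r : nat) := 'I_r -> Fpoly.
Definition hvecF r (delta : 'I_r -> nat) (d : nat) (m : Fvec r) : Fvec r :=
  fun i w => if size w + delta i == d then m i w else 0.
Definition homvecF r (delta : 'I_r -> nat) (d : nat) (m : Fvec r) : Prop :=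
  forall i w, m i w != 0 -> size w + delta i = d.

(* A graded right A-submodule of (+)_i A[-delta_i], A = F/I, represented by
   its (I-saturated) preimage M in F^r: M is a graded right F-submodule of
   (+)_i F[-delta_i] containing (+)_i e_i I. *)
Record graded_right_submodule r (I : Fpoly -> Prop) (delta : 'I_r -> nat)
    (M : Fvec r -> Prop) : Prop := {
  gm_poly : forall m, M m -> forall i, is_Fpoly (m i);
  gm_zero : M (@vzero K word r);
  gm_add : forall m m', M m -> M m' -> M (vadd m m');
  gm_scale : forall c m, M m -> M (vscale c m);
  gm_rmul : forall m g, is_Fpoly g -> M m -> M (fun i => mulF (m i) g);
  gm_satI : forall m, (forall i, I (m i)) -> M m;
  gm_graded : forall m d, M m -> M (hvecF delta d m) }.
End FreeAlg.

(* The commutative polynomial ring P = K[x_ij | 1<=i<=n, j>=1].        *)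
(* A monomial is a multiset of variables (i,j), represented canonically *)
(* as the list of its variables sorted by column, then by letter.      *)
Section Letterplace.
Variables (K : fieldType) (n : nat).
Definition pvar := ('I_n * nat)%type.
Definition pmon := seq pvar.
Definition lek (a b : pvar) : bool :=
  (a.2 < b.2)%N || ((a.2 == b.2) && (a.1 <= b.1)%N).
Definition validP (u : pmon) : bool := sorted lek u && all (fun p => 0 < p.2)%N u.
Definition Ppoly := pmon -> K.
Definition is_Ppoly (f : Ppoly) := fin_supp validP f.
Definition mono (u : pmon) : Ppoly := fun t => (t == u)%:R.
Definition xmul (v : pvar) (f : Ppoly) : Ppoly :=
  fun u => if validP u && (v \in u) then f (rem v u) else 0.
(* iota : F -> P, x_{i1}..x_{id} |-> x_{i1,1} .. x_{id,d} (linear) *)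
Definition lpmon (w : word n) : pmon := zip w (iota 1 (size w)).
Definition iotaF (f : Fpoly K n) : Ppoly :=
  fun u => if u == lpmon (map fst u) then f (map fst u) else 0.
(* sigma : x_ij |-> x_{i,j+1} (algebra endomorphism) *)
Definition sigmaP (f : Ppoly) : Ppoly :=
  fun u => if validP u && all (fun p => 1 < p.2)%N u
           then f [seq (p.1, p.2.-1) | p <- u] else 0.

Inductive ideal_gen (G : Ppoly -> Prop) : Ppoly -> Prop :=
| ig_base f : G f -> ideal_gen G f
| ig_zero : ideal_gen G (@fzero K pmon)
| ig_add f g : ideal_gen G f -> ideal_gen G g -> ideal_gen G (fadd f g)
| ig_scale c f : ideal_gen G f -> ideal_gen G (fscale c f)
| ig_xmul v f : (0 < v.2)%N -> ideal_gen G f -> ideal_gen G (xmul v f).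

Definition Qgen (f : Ppoly) : Prop :=
  exists (i k : 'I_n) (j : nat), (0 < j)%N /\ f = xmul (i, j) (xmul (k, j) (mono [::])).
Definition Igen (I : Fpoly K n -> Prop) (f : Ppoly) : Prop :=
  exists (k : nat) (g : Fpoly K n), I g /\ f = iter k sigmaP (iotaF g).
(* preimage in P of J (ideal of R = P/Q); S = R/J = P / Jpre *)
Definition Jpre (I : Fpoly K n -> Prop) : Ppoly -> Prop :=
  ideal_gen (fun f => Qgen f \/ Igen I f).

Section Modules.
Variable r : nat.
Definition Pvec := 'I_r -> Ppoly.
(* iota : (+)_i A[-delta_i] -> (+)_i S[-delta_i], e_i f |-> e'_i sigma^delta_i(iota f) *)
Definition iota_vec (delta : 'I_r -> nat) (m : Fvec K n r) : Pvec :=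
  fun i => iter (delta i) sigmaP (iotaF (m i)).

Inductive submod_gen (G : Pvec -> Prop) : Pvec -> Prop :=
| sg_base g : G g -> submod_gen G g
| sg_zero : submod_gen G (@vzero K pmon r)
| sg_add g h : submod_gen G g -> submod_gen G h -> submod_gen G (vadd g h)
| sg_scale c g : submod_gen G g -> submod_gen G (vscale c g)
| sg_xmul v g : (0 < v.2)%N -> submod_gen G g -> submod_gen G (fun i => xmul v (g i)).

Variables (I : Fpoly K n -> Prop) (delta : 'I_r -> nat) (M : Fvec K n r -> Prop).

(* vectors with all entries in Jpre (preimage of 0 in S^r) *)
Definition Jvec (g : Pvec) : Prop := forall i, Jpre I (g i).
(* vectors with all entries in I (preimage of 0 in A^r) *)
Definition Ivec (m : Fvec K n r) : Prop := forall i, I (m i).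

(* preimage in P^r of M' = L(M) : S-submodule generated by iota(M) *)
Definition Lpre : Pvec -> Prop :=
  submod_gen (fun g => (exists m, M m /\ g = iota_vec delta m) \/ Jvec g).

Definition in_Ksub (dl d : nat) (h : Ppoly) : Prop :=
  is_Ppoly h /\ forall u, h u != 0 -> all (fun p => (dl < p.2 <= d)%N) u.

(* preimage in F^r of M_d *)
Definition Md_pre (d : nat) (m : Fvec K n r) : Prop :=
  exists m0, M m0 /\ homvecF delta d m0 /\ Ivec (vsub m m0).

(* preimage in P^r of iota(M_d) *)
Definition iotaMd_pre (d : nat) (g : Pvec) : Prop :=
  exists m, M m /\ homvecF delta d m /\ Jvec (vsub g (iota_vec delta m)).

(* preimage in P^r of M'(d)_d, M'(d) = M' /\ (+)_i S(delta_i,d)[-delta_i] *)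
Definition Mpd_pre (d : nat) (g : Pvec) : Prop :=
  Lpre g /\
  (exists h : Pvec, (forall i, in_Ksub (delta i) d (h i)) /\ Jvec (vsub g h)) /\
  (exists h : Pvec, (forall i, is_Ppoly (h i)) /\
                    (forall i u, h i u != 0 -> (size u + delta i)%N = d) /\
                    Jvec (vsub g h)).
End Modules.
End Letterplace.

(* Main.v *)
Require Import Defs.
From HB Require Import structures.
From mathcomp Require Import all_boot all_order all_algebra.
From Stdlib Require Import FunctionalExtensionality ClassicalEpsilon.
From mathcomp Require Import zify.
From mathcomp Require Import ring.
From Stdlib Require Import Classical.
Set Implicit Arguments. Unset Strict Implicit. Unset Printing Implicit Defensive.
Import GRing.Theory.
Local Open Scope ring_scope.
Section LP.
Variables (K : fieldType) (n : nat).
Definition mulmon (u : pmon n) (f : Ppoly K n) : Ppoly K n := foldr (@xmul K n) f u.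
Fixpoint msub (u t : pmon n) : option (pmon n) :=
  match u with [::] => Some t | v :: u' => if v \in t then msub u' (rem v t) else None end.
Lemma lek_trans : transitive (@lek n).
Proof. move=> b a c; rewrite /lek; lia. Qed.
Lemma lek_anti : antisymmetric (@lek n).
Proof.
move=> [a1 a2] [b1 b2]; rewrite /lek /= => h.
have e : a2 = b2 by lia.
subst; congr pair; apply/val_inj => /=; lia.
Qed.
Lemma lek_total : total (@lek n).
Proof. move=> [a1 a2] [b1 b2]; rewrite /lek /=; lia. Qed.
Lemma mulmon_cons v u f : mulmon (v :: u) f = xmul v (mulmon u f).
Proof. by []. Qed.
Lemma mulmon_cat u1 u2 f : mulmon (u1 ++ u2) f = mulmon u1 (mulmon u2 f).
Proof. by rewrite /mulmon foldr_cat. Qed.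
Lemma mulmon_rcons u v f : mulmon (rcons u v) f = mulmon u (xmul v f).
Proof. by rewrite /mulmon foldr_rcons. Qed.

Lemma validP_subseq (s t : pmon n) : subseq s t -> validP t -> validP s.
Proof.
move=> ss /andP[st alt]; apply/andP; split; first exact: (subseq_sorted lek_trans ss st).
apply/allP=> x /(mem_subseq ss) xt; exact: (allP alt).
Qed.

Lemma mulmonE u f t : validP t -> mulmon u f t = if msub u t is Some s then f s else 0.
Proof.
elim: u t => [|v u IH] t vt //=. rewrite /xmul vt /=. case: ifP => vin //.
apply: IH. apply: validP_subseq vt; exact: rem_subseq.
Qed.

Lemma mulmon_invalid u f t : ~~ validP t -> u != [::] -> mulmon u f t = 0.
Proof. case: u => [|v u] // vt _; by rewrite mulmon_cons /xmul (negbTE vt). Qed.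

Lemma msub_uniq u (t : pmon n) : uniq t ->
  msub u t = if uniq u && all (mem t) u then Some [seq x <- t | x \notin u] else None.
Proof.
elim: u t => [|v u IH] t ut /=.
  by rewrite (@eq_filter _ _ predT) ?filter_predT.
case vt: (v \in t); last by rewrite andbF.
rewrite IH ?rem_uniq //.
have -> : all (mem (rem v t)) u = (v \notin u) && all (mem t) u.
  rewrite -has_pred1 -all_predC -all_predI; apply: eq_all => x /=.
  by rewrite (mem_rem_uniq v ut) !inE.
case: (v \notin u); case: (uniq u); case: (all (mem t) u) => //=.
congr Some; rewrite (rem_filter _ ut) -filter_predI; apply: eq_filter => x /=.
by rewrite in_cons negb_or andbC.
Qed.

Lemma msub_nil u (t : pmon n) : msub u t = Some [::] <-> perm_eq t u.
Proof.
elim: u t => [|v u IH] t /=.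
  split=> [[->]//|/perm_size/eqP]; by rewrite size_eq0 => /eqP->.
case vt: (v \in t).
  rewrite IH; split=> h.
    apply: perm_trans (perm_to_rem vt) _; by rewrite perm_cons.
  by rewrite -(perm_cons v); apply: perm_trans h; rewrite perm_sym; exact: perm_to_rem.
split=> // h; by rewrite (perm_mem h) mem_head in vt.
Qed.
Definition lpl (o : nat) (w : word n) : pmon n := zip w (iota o.+1 (size w)).
Definition lpat (o : nat) (t : pmon n) : bool := t == lpl o (map fst t).

Lemma lpl_cons o x w : lpl o (x :: w) = (x, o.+1) :: lpl o.+1 w.
Proof. by []. Qed.
Lemma lpl_nil o : lpl o [::] = [::].
Proof. by []. Qed.
Lemma size_lpl o w : size (lpl o w) = size w.
Proof. by rewrite /lpl size_zip size_iota minnn. Qed.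
Lemma map_fst_lpl o w : map fst (lpl o w) = w.
Proof. by rewrite /lpl -/(unzip1 _) unzip1_zip // size_iota. Qed.
Lemma map_snd_lpl o w : map snd (lpl o w) = iota o.+1 (size w).
Proof. by rewrite /lpl -/(unzip2 _) unzip2_zip // size_iota. Qed.
Lemma lpl_cat o w1 w2 : lpl o (w1 ++ w2) = lpl o w1 ++ lpl (o + size w1) w2.
Proof. by rewrite /lpl size_cat iotaD zip_cat ?size_iota // addSn. Qed.
Lemma lpatP o t : reflect (exists w, t = lpl o w) (lpat o t).
Proof.
apply: (iffP eqP) => [h|[w ->]]; first by exists (map fst t).
by rewrite map_fst_lpl.
Qed.
Lemma lpat_lpl o w : lpat o (lpl o w).
Proof. by apply/lpatP; exists w. Qed.
Lemma path_lpl o x w : path (@lek n) (x, o) (lpl o w).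
Proof.
elim: w o x => [|y w IH] o x //=. rewrite IH andbT /lek /=; lia.
Qed.
Lemma valid_lpl o w : validP (lpl o w).
Proof.
apply/andP; split; first by case: w => //= y w; exact: path_lpl.
elim: w o => [|y w IH] o //=; exact: (IH o.+1).
Qed.
Lemma uniq_snd_lpl o w : uniq (map snd (lpl o w)).
Proof. by rewrite map_snd_lpl iota_uniq. Qed.
Lemma uniq_lpl o w : uniq (lpl o w).
Proof. have := uniq_snd_lpl o w; exact: map_uniq. Qed.
Definition decP (t : pmon n) : pmon n := map (fun p => (p.1, p.2.-1)) t.
Definition incP (t : pmon n) : pmon n := map (fun p => (p.1, p.2.+1)) t.
Lemma dec_lpl k w : decP (lpl k.+1 w) = lpl k w.
Proof. by elim: w k => [|x w IH] k //=; rewrite IH. Qed.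
Lemma inc_lpl k w : incP (lpl k w) = lpl k.+1 w.
Proof. by elim: w k => [|x w IH] k //=; rewrite IH. Qed.
Lemma inc_dec t : all (fun p => 0 < p.2)%N t -> incP (decP t) = t.
Proof. elim: t => [|[a b] t IH] //= /andP[b0 h]; by rewrite IH // prednK. Qed.
Lemma all_lpl o w : all (fun p => o < p.2)%N (lpl o w).
Proof. elim: w o => [|x w IH] o //=; rewrite ltnSn /=; apply: sub_all (IH o.+1) => p /=; lia. Qed.

Lemma sigma_iotaE k (x : Fpoly K n) t :
  iter k (@sigmaP K n) (iotaF x) t = if lpat k t then x (map fst t) else 0.
Proof.
elim: k t => [|k IH] t; first by [].
rewrite iterS /sigmaP -/(decP t) IH.
have mf : map fst (decP t) = map fst t by rewrite -map_comp.
case h: (lpat k.+1 t).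
  move/lpatP: h => [w ->].
  have -> : all (fun p : pvar n => 1 < p.2)%N (lpl k.+1 w).
    by apply: sub_all (all_lpl k.+1 w) => p /=; lia.
  by rewrite valid_lpl dec_lpl lpat_lpl !map_fst_lpl.
case: ifP => // /andP[vt a1]; case: ifP => // /eqP e.
suff : lpat k.+1 t by rewrite h.
apply/lpatP; exists (map fst t); rewrite -[LHS](inc_dec (t := t)); last by case/andP: vt.
by rewrite e mf inc_lpl.
Qed.
Variable d : nat.
Definition piP (o : nat) (F : Ppoly K n) : Ppoly K n :=
  fun t => if lpat o t && (size t + o == d)%N then F t else 0.
Definition pullP (o : nat) (F : Ppoly K n) : Fpoly K n :=
  fun w => if (size w + o == d)%N then F (lpl o w) else 0.
Definition sig (o : nat) (x : Fpoly K n) : Ppoly K n := iter o (@sigmaP K n) (iotaF x).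

Lemma sigE o x t : sig o x t = if lpat o t then x (map fst t) else 0.
Proof. exact: sigma_iotaE. Qed.
Lemma sig_lpl o x w : sig o x (lpl o w) = x w.
Proof. by rewrite sigE lpat_lpl map_fst_lpl. Qed.

Lemma pi_pull o F : piP o F = sig o (pullP o F).
Proof.
apply: functional_extensionality => t; rewrite /piP sigE /pullP.
case h: (lpat o t) => //=; move/lpatP: h => [w ->].
by rewrite size_lpl map_fst_lpl.
Qed.

Lemma mulmon_add u f g : mulmon u (fadd f g) = fadd (mulmon u f) (mulmon u g).
Proof.
elim: u => [|v u IH] //=; apply: functional_extensionality => t.
rewrite IH /xmul /fadd; case: ifP => //; by rewrite addr0.
Qed.
Lemma mulmon_scale u c f : mulmon u (fscale c f) = fscale c (mulmon u f).
Proof.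
elim: u => [|v u IH] //=; apply: functional_extensionality => t.
rewrite IH /xmul /fscale; case: ifP => //; by rewrite mulr0.
Qed.
Lemma mulmon_zero u : mulmon u (@fzero K (pmon n)) = @fzero K (pmon n).
Proof.
elim: u => [|v u IH] //=; apply: functional_extensionality => t.
rewrite IH /xmul /fzero; by case: ifP.
Qed.
Lemma piP_add o f g : piP o (fadd f g) = fadd (piP o f) (piP o g).
Proof. apply: functional_extensionality => t; rewrite /piP /fadd; case: ifP => //; by rewrite addr0. Qed.
Lemma piP_scale o c f : piP o (fscale c f) = fscale c (piP o f).
Proof. apply: functional_extensionality => t; rewrite /piP /fscale; case: ifP => //; by rewrite mulr0. Qed.
Lemma piP_zero o : piP o (@fzero K (pmon n)) = @fzero K (pmon n).
Proof. apply: functional_extensionality => t; rewrite /piP /fzero; by case: ifP. Qed.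
Lemma sig_add o x y : sig o (fadd x y) = fadd (sig o x) (sig o y).
Proof. apply: functional_extensionality => t; rewrite /fadd !sigE; case: ifP => //; by rewrite addr0. Qed.
Lemma sig_scale o c x : sig o (fscale c x) = fscale c (sig o x).
Proof. apply: functional_extensionality => t; rewrite /fscale !sigE; case: ifP => //; by rewrite mulr0. Qed.
Lemma sig_zero o : sig o (@fzero K (word n)) = @fzero K (pmon n).
Proof. apply: functional_extensionality => t; rewrite /fzero !sigE; by case: ifP. Qed.
Lemma sort_eqP (u s : pmon n) : sorted (@lek n) s -> perm_eq u s -> sort (@lek n) u = s.
Proof.
move=> ss pus; apply: (sorted_eq lek_trans lek_anti) => //; first exact: (sort_sorted lek_total).
by rewrite perm_sort.
Qed.

Lemma mem_mask_iota a N (m : bitseq) j : size m = N -> (j < N)%N ->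
  ((a + j)%N \in mask m (iota a N)) = nth false m j.
Proof.
elim: m a N j => [|x m IH] a N j /= <- // hj.
case: j hj => [|j] hj.
  rewrite addn0; case: x => /=; first by rewrite mem_head.
  apply/negbTE; apply/negP => /mem_mask; rewrite mem_iota; lia.
have -> : (a + j.+1 = a.+1 + j)%N by lia.
rewrite [RHS]/= -(IH a.+1 (size m) j) //; case: x => //=; rewrite in_cons.
have -> : ((a.+1 + j)%N == a) = false by apply/eqP; lia.
by [].
Qed.

Lemma mask_iota_shape a b e N (m : bitseq) : size m = N -> mask m (iota a N) = iota b e ->
  let p := if e == 0%N then 0%N else (b - a)%N in
  (p + e <= N)%N && ((e == 0%N) || (a <= b)%N) /\
  forall j, (j < N)%N -> nth false m j = (p <= j < p + e)%N.
Proof.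
move=> sm h p.
have key : forall j, (j < N)%N -> nth false m j = ((a + j)%N \in iota b e).
  by move=> j hj; rewrite -h mem_mask_iota.
case: (posnP e) => [e0|ep].
  subst e; rewrite /p /=; split; first by [].
  by move=> j hj; rewrite key.
have hb : (b \in iota a N) by apply: (@mem_mask _ _ m); rewrite h mem_iota; lia.
have he : ((b + e.-1)%N \in iota a N) by apply: (@mem_mask _ _ m); rewrite h mem_iota; lia.
move: hb he; rewrite !mem_iota => hb he.
have pe : p = (b - a)%N by rewrite /p; case: eqP => //; lia.
split; first by rewrite pe; apply/andP; split; [lia| apply/orP; right; lia].
move=> j hj; rewrite key // mem_iota pe; lia.
Qed.
Lemma nth_shape p e q j : (j < p + e + q)%N ->
  nth false (nseq p false ++ nseq e true ++ nseq q false) j = (p <= j < p + e)%N.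
Proof.
move=> hj; rewrite nth_cat size_nseq; case: ifP => h1.
  rewrite nth_nseq if_same; lia.
rewrite nth_cat size_nseq; case: ifP => h2; rewrite nth_nseq; case: ifP; lia.
Qed.

Lemma shape_eq (m : bitseq) p e N : size m = N -> (p + e <= N)%N ->
  (forall j, (j < N)%N -> nth false m j = (p <= j < p + e)%N) ->
  m = nseq p false ++ nseq e true ++ nseq (N - p - e) false.
Proof.
move=> sm hpe h; apply: (@eq_from_nth _ false).
  rewrite !size_cat !size_nseq; lia.
move=> j hj; rewrite nth_shape; first by apply: h; lia.
lia.
Qed.

Lemma mask_blocks (T : Type) p e q (B1 B2 B3 : seq T) : size B1 = p -> size B2 = e ->
  mask (nseq p false ++ nseq e true ++ nseq q false) (B1 ++ B2 ++ B3) = B2.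
Proof.
move=> s1 s2; rewrite mask_cat ?size_nseq // mask_cat ?size_nseq //.
by rewrite !mask_false mask_true ?s2 // cats0.
Qed.

Lemma mask_blocksC (T : Type) p e q (B1 B2 B3 : seq T) : size B1 = p -> size B2 = e ->
  (size B3 <= q)%N ->
  mask (nseq p true ++ nseq e false ++ nseq q true) (B1 ++ B2 ++ B3) = B1 ++ B3.
Proof.
move=> s1 s2 s3; rewrite mask_cat ?size_nseq // mask_cat ?size_nseq //.
by rewrite !mask_false !mask_true ?s1.
Qed.
Definition monoF (a : word n) : Fpoly K n := fun v => (v == a)%:R.

Lemma mulF_monoL a (g : Fpoly K n) w :
  mulF (monoF a) g w = if take (size a) w == a then g (drop (size a) w) else 0.
Proof.
rewrite /mulF /monoF.
have sz : forall i : 'I_(size w).+1, take i w = a -> i = size a :> nat.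
  move=> i ti; rewrite -ti size_take; have := ltn_ord i; case: ifP; lia.
case: (leqP (size a) (size w)) => h.
  have h' : (size a < (size w).+1)%N by lia.
  rewrite (bigD1 (Ordinal h')) //= big1 ?addr0.
    by case: eqP => _; rewrite ?mul1r ?mul0r.
  move=> i hi; case: eqP => ti; last by rewrite mul0r.
  have e := sz i ti; move: hi; rewrite (_ : i = Ordinal h') ?eqxx //; exact/val_inj.
transitivity (0 : K).
  apply: big1 => i _; case: eqP => ti; last by rewrite mul0r.
  have := sz i ti; have := ltn_ord i; lia.
rewrite take_oversize ?(ltnW h) //; case: eqP => // ew; by move: h; rewrite -ew ltnn.
Qed.

Lemma mulF_monoR (f : Fpoly K n) b w :
  mulF f (monoF b) w = if drop (size w - size b) w == b then f (take (size w - size b) w) else 0.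
Proof.
rewrite /mulF /monoF.
have sz : forall i : 'I_(size w).+1, drop i w = b -> (size w - i = size b)%N.
  by move=> i ti; rewrite -ti size_drop.
case: (leqP (size b) (size w)) => h.
  have h' : (size w - size b < (size w).+1)%N by lia.
  rewrite (bigD1 (Ordinal h')) //= big1 ?addr0.
    by case: eqP => _; rewrite ?mulr1 ?mulr0.
  move=> i hi; case: eqP => ti; last by rewrite mulr0.
  have e := sz i ti; move: hi; rewrite (_ : i = Ordinal h') ?eqxx //; apply/val_inj => /=.
  have := ltn_ord i; lia.
transitivity (0 : K).
  apply: big1 => i _; case: eqP => ti; last by rewrite mulr0.
  have := sz i ti; have := ltn_ord i; lia.
have -> : (size w - size b = 0)%N by lia.
rewrite drop0; case: eqP => // ew; by move: h; rewrite -ew ltnn.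
Qed.
Definition eC (o : nat) (u : pmon n) := (d - o - size u)%N.
Definition pC o k u := if eC o u == 0%N then 0%N else (k - o)%N.
Definition WC (u : pmon n) := map fst (sort (@lek n) u).
Definition aC o k u := take (pC o k u) (WC u).
Definition bC o k u := drop (pC o k u) (WC u).
Definition Ccond o k (u : pmon n) : bool :=
  [&& uniq u, (o + size u <= d)%N, (eC o u == 0%N) || ((o <= k) && (k - o <= size u))%N &
      sort (@lek n) u == lpl o (aC o k u) ++ lpl (o + pC o k u + eC o u) (bC o k u)].

Lemma split3 (T : Type) p e (w : seq T) : w = take p w ++ take e (drop p w) ++ drop (p + e)%N w.
Proof. by rewrite addnC -drop_drop cat_take_drop cat_take_drop. Qed.

Lemma lpl_split3 o p e w : (p + e <= size w)%N ->
  lpl o w = lpl o (take p w) ++ lpl (o + p)%N (take e (drop p w)) ++ lpl (o + p + e)%N (drop (p + e)%N w).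
Proof.
move=> h; rewrite {1}(split3 p e w) lpl_cat lpl_cat size_take size_take size_drop.
have -> : (if (p < size w)%N then p else size w) = p by case: ltnP; lia.
have -> : (if (e < size w - p)%N then e else (size w - p)%N) = e by case: ltnP; lia.
by [].
Qed.
Lemma core_fwd o k (u : pmon n) (w : word n) : (size w + o)%N = d -> uniq u -> all (mem (lpl o w)) u ->
  lpat k [seq x <- lpl o w | x \notin u] ->
  [/\ Ccond o k u, take (pC o k u) w = aC o k u, drop (pC o k u + eC o u)%N w = bC o k u &
      [seq x <- lpl o w | x \notin u] = lpl (o + pC o k u)%N (take (eC o u) (drop (pC o k u) w))].
Proof.
move=> hw uu sub lp.
have ut : uniq (lpl o w) := uniq_lpl o w.
have pus : perm_eq u [seq x <- lpl o w | x \in u].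
  apply: uniq_perm => //; first exact: filter_uniq.
  move=> x; rewrite mem_filter; case xu: (x \in u) => //=; symmetry; exact: (allP sub x xu).
have su : size [seq x <- lpl o w | x \in u] = size u by rewrite (perm_size pus).
have hN : (size [seq x <- lpl o w | x \notin u] + size [seq x <- lpl o w | x \in u])%N = size w.
  have := count_predC (mem u) (lpl o w); rewrite size_lpl => <-.
  rewrite !size_filter addnC; congr (_ + _)%N; exact: eq_count.
have he : eC o u = size [seq x <- lpl o w | x \notin u] by rewrite /eC -hw -hN su; lia.
have sm : [seq x <- lpl o w | x \notin u] = mask [seq x \notin u | x <- lpl o w] (lpl o w)
  by rewrite filter_mask.
have hm : mask [seq x \notin u | x <- lpl o w] (iota o.+1 (size w)) = iota k.+1 (eC o u).
  move/eqP: lp => lp; have := congr1 (map snd) lp.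
  rewrite map_snd_lpl size_map -he => <-; by rewrite sm map_mask map_snd_lpl.
have szm : size [seq x \notin u | x <- lpl o w] = size w by rewrite size_map size_lpl.
have [/andP[hpe hk] hnth] := mask_iota_shape szm hm.
have pe : (if eC o u == 0%N then 0%N else (k.+1 - o.+1)%N) = pC o k u by rewrite /pC subSS.
rewrite pe in hpe hk hnth.
have hm2 := shape_eq szm hpe hnth.
have ht := lpl_split3 o hpe.
have s1 : size (take (pC o k u) w) = pC o k u by rewrite size_takel //; lia.
have s2 : size (take (eC o u) (drop (pC o k u) w)) = eC o u by rewrite size_takel // size_drop; lia.
have hs : [seq x <- lpl o w | x \notin u] = lpl (o + pC o k u)%N (take (eC o u) (drop (pC o k u) w)).
  by rewrite sm hm2 [X in mask _ X]ht mask_blocks // size_lpl.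
have hs' : [seq x <- lpl o w | x \in u] =
    lpl o (take (pC o k u) w) ++ lpl (o + pC o k u + eC o u)%N (drop (pC o k u + eC o u)%N w).
  rewrite filter_mask.
  have -> : [seq x \in u | x <- lpl o w] = map negb [seq x \notin u | x <- lpl o w].
    by rewrite -map_comp; apply: eq_map => x /=; rewrite negbK.
  rewrite hm2 !map_cat !map_nseq /= [X in mask _ X]ht mask_blocksC // ?size_lpl // size_drop; lia.
have hsort : sort (@lek n) u = [seq x <- lpl o w | x \in u].
  apply: sort_eqP => //; apply: sorted_filter; first exact: lek_trans.
  by case/andP: (valid_lpl o w).
have hW : WC u = take (pC o k u) w ++ drop (pC o k u + eC o u)%N w.
  by rewrite /WC hsort hs' map_cat !map_fst_lpl.
have ha : aC o k u = take (pC o k u) w by rewrite /aC hW take_size_cat.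
have hb : bC o k u = drop (pC o k u + eC o u)%N w by rewrite /bC hW drop_size_cat.
split => //.
have hsz : (size u + eC o u)%N = size w by rewrite he -su addnC.
unfold pvar in hsz.
rewrite /Ccond uu /= hsort hs' ha hb eqxx andbT; apply/andP; split; first lia.
move: hk hpe; rewrite /pC; case: (eqVneq (eC o u) 0%N) => [->|ne] //=; lia.
Qed.
Lemma core_bwd o k (u : pmon n) (w : word n) : (size w + o)%N = d -> Ccond o k u ->
  take (pC o k u) w = aC o k u -> drop (pC o k u + eC o u)%N w = bC o k u ->
  [/\ uniq u, all (mem (lpl o w)) u,
      [seq x <- lpl o w | x \notin u] = lpl (o + pC o k u)%N (take (eC o u) (drop (pC o k u) w)) &
      lpat k (lpl (o + pC o k u)%N (take (eC o u) (drop (pC o k u) w)))].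
Proof.
move=> hw /and4P[uu hud hk /eqP hs] ha hb.
have hsu : exists su, size u = su by eexists.
case: hsu => su hsu'; rewrite hsu' in hud hk *.
have he : (eC o u + size u)%N = size w.
  rewrite /eC hsu'; lia.
have hp : (pC o k u <= size u)%N.
  move: hk; rewrite /pC; case: (eqVneq (eC o u) 0%N) => //= _; lia.
have hpe : (pC o k u + eC o u <= size w)%N by lia.
have ht := lpl_split3 o hpe; rewrite ha hb in ht.
have pu : perm_eq u (sort (@lek n) u) by rewrite perm_sym perm_sort.
rewrite hs in pu.
have ut := uniq_lpl o w; rewrite ht !cat_uniq in ut.
case/and5P: ut => _ hn1 _ hn2 _.
have inu : forall x, (x \in u) = (x \in lpl o (aC o k u)) || (x \in lpl (o + pC o k u + eC o u)%N (bC o k u)).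
  by move=> x; rewrite (perm_mem pu) mem_cat.
split => //.
- apply/allP => x xu; change (x \in lpl o w); rewrite ht !mem_cat; move: xu; rewrite inu => /orP[->|->] //; by rewrite !orbT.
- rewrite ht !filter_cat.
  rewrite (@eq_in_filter _ _ pred0 (lpl o _)); last by move=> x xb /=; rewrite inu xb.
  rewrite (@eq_in_filter _ _ pred0 (lpl (o + pC o k u + eC o u)%N _)); last by move=> x xb /=; rewrite inu xb orbT.
  rewrite (@eq_in_filter _ _ predT (lpl (o + pC o k u)%N _)).
    by rewrite !filter_pred0 filter_predT cats0.
  move=> x xb /=; rewrite inu; apply/negP => /orP[h|h].
    by move/hasP: hn1; apply; exists x => //; rewrite mem_cat xb.
  by move/hasP: hn2; apply; exists x.
- move: hk; rewrite /pC; case: (eqVneq (eC o u) 0%N) => [e0|ne] /=.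
    by rewrite e0 take0.
  move=> /andP[ok _]; rewrite subnKC //; exact: lpat_lpl.
Qed.
Lemma csizes o k (u : pmon n) (w : word n) : (size w + o)%N = d -> Ccond o k u ->
  [/\ size (aC o k u) = pC o k u, (size w - size (bC o k u) = pC o k u + eC o u)%N
    & (pC o k u + eC o u <= size w)%N].
Proof.
move=> hw /and4P[uu hud hk _].
have hsu : exists su, size u = su by eexists.
case: hsu => su hsu'; rewrite hsu' in hud hk *.
have hW : size (WC u) = su by rewrite /WC size_map size_sort.
have hp : (pC o k u <= su)%N.
  move: hk; rewrite /pC; case: (eqVneq (eC o u) 0%N) => //= _; lia.
have he : (eC o u + su)%N = size w by rewrite /eC hsu'; lia.
rewrite /aC /bC size_take size_drop hW; split; try lia.
case: ltnP; lia.
Qed.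

Lemma core o k (u : pmon n) (g : Fpoly K n) (w : word n) :
  pullP o (piP o (mulmon u (sig k g))) w =
  if (size w + o == d)%N && Ccond o k u
  then mulF (mulF (monoF (aC o k u)) g) (monoF (bC o k u)) w else 0.
Proof.
rewrite /pullP /piP lpat_lpl size_lpl.
case hw: (size w + o == d)%N => //=; move/eqP: hw => hw.
rewrite mulmonE ?valid_lpl // msub_uniq ?uniq_lpl // mulF_monoR mulF_monoL.
case hu: (uniq u && all (mem (lpl o w)) u); last first.
  case C: (Ccond o k u) => //=.
  have [sa sb spe] := csizes hw C.
  rewrite sb sa take_takel ?leq_addr //.
  case: eqP => // db; case: eqP => // ta.
  have [uu sub _ _] := core_bwd hw C ta db.
  by rewrite uu sub in hu.
rewrite sigE; case/andP: hu => uu sub.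
case hl: (lpat k [seq x <- lpl o w | x \notin u]).
  have [C ta db hs] := core_fwd hw uu sub hl.
  have [sa sb spe] := csizes hw C.
  rewrite C sb sa take_takel ?leq_addr // ta db !eqxx hs map_fst_lpl.
  by rewrite take_drop addnC.
case C: (Ccond o k u) => //=.
have [sa sb spe] := csizes hw C.
rewrite sb sa take_takel ?leq_addr //.
case: eqP => // db; case: eqP => // ta.
have [_ _ hs lp'] := core_bwd hw C ta db.
by rewrite hs lp' in hl.
Qed.
Lemma monoF_poly a : is_Fpoly (monoF a).
Proof. exists [:: a] => t; rewrite /monoF inE; case: (t == a) => //=; by rewrite eqxx. Qed.

Lemma piQ o u i k j : piP o (mulmon u (xmul (i, j) (xmul (k, j) (mono K [::])))) = @fzero K (pmon n).
Proof.
apply: functional_extensionality => t; rewrite /piP /fzero.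
case: ifP => // /andP[/lpatP[w ->] _].
have -> : xmul (i, j) (xmul (k, j) (mono K [::])) = mulmon [:: (i, j); (k, j)] (mono K [::]) by [].
rewrite -mulmon_cat mulmonE ?valid_lpl //.
case E: (msub _ _) => [s|] //; rewrite /mono; case: eqP => [s0|] //; subst s.
move/msub_nil: E => pe; have := uniq_snd_lpl o w.
by rewrite (perm_uniq (perm_map snd pe)) map_cat cat_uniq /= inE eqxx !andbF.
Qed.

Variable I : Fpoly K n -> Prop.
Hypothesis HI : graded_twosided_ideal I.

Definition Ihom o (x : Fpoly K n) := I x /\ forall w, x w != 0 -> (size w + o)%N = d.

Lemma Ihom_zero o : Ihom o (@fzero K (word n)).
Proof. split; [exact: gi_zero HI | by move=> w; rewrite /fzero eqxx]. Qed.
Lemma Ihom_add o x y : Ihom o x -> Ihom o y -> Ihom o (fadd x y).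
Proof.
move=> [Ix hx] [Iy hy]; split; first exact: gi_add.
move=> w; rewrite /fadd; case: (eqVneq (x w) 0) => [->|/hx //]; rewrite add0r; exact: hy.
Qed.
Lemma Ihom_scale o c x : Ihom o x -> Ihom o (fscale c x).
Proof.
move=> [Ix hx]; split; first exact: gi_scale.
move=> w; rewrite /fscale; case: (eqVneq (x w) 0) => [->|/hx //]; by rewrite mulr0 eqxx.
Qed.

Lemma pull_pi o F : pullP o (piP o F) = pullP o F.
Proof.
apply: functional_extensionality => w; rewrite /pullP /piP lpat_lpl size_lpl.
by case: ifP => // ->.
Qed.

Lemma piIgen o u k g : I g -> exists x, Ihom o x /\ piP o (mulmon u (sig k g)) = sig o x.
Proof.
move=> Ig; exists (pullP o (piP o (mulmon u (sig k g)))); split; last by rewrite pull_pi pi_pull.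
case C: (Ccond o k u).
  have od : (o <= d)%N by case/and4P: C => _ h _ _; lia.
  have -> : pullP o (piP o (mulmon u (sig k g))) =
      hpartF (d - o)%N (mulF (mulF (monoF (aC o k u)) g) (monoF (bC o k u))).
    apply: functional_extensionality => w; rewrite core C andbT /hpartF.
    have -> : (size w + o == d)%N = (size w == d - o)%N by apply/eqP/eqP; lia.
    by [].
  split; first by apply: gi_graded HI _ _ (gi_rmul HI (monoF_poly _) (gi_lmul HI (monoF_poly _) Ig)).
  move=> w; rewrite /hpartF; case: (size w =P (d - o)%N) => [h _|]; [lia | by rewrite eqxx].
have -> : pullP o (piP o (mulmon u (sig k g))) = @fzero K (word n).
  by apply: functional_extensionality => w; rewrite core C andbF.
exact: Ihom_zero.
Qed.
Lemma Jlemma f : Jpre I f -> forall o u, exists x, Ihom o x /\ piP o (mulmon u f) = sig o x.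
Proof.
elim => {f}.
- move=> f [[i [k [j [_ ->]]]] | [k [g [Ig ->]]]] o u.
    exists (@fzero K (word n)); split; [exact: Ihom_zero | by rewrite piQ sig_zero].
  exact: piIgen.
- move=> o u; exists (@fzero K (word n)); rewrite mulmon_zero piP_zero sig_zero.
  split => //; exact: Ihom_zero.
- move=> f g _ IHf _ IHg o u.
  have [x [hx ex]] := IHf o u; have [y [hy ey]] := IHg o u.
  exists (fadd x y); rewrite mulmon_add piP_add ex ey sig_add; split => //; exact: Ihom_add.
- move=> c f _ IH o u; have [x [hx ex]] := IH o u.
  exists (fscale c x); rewrite mulmon_scale piP_scale ex sig_scale; split => //; exact: Ihom_scale.
- move=> v f _ _ IH o u; rewrite -mulmon_rcons; exact: IH.
Qed.
Lemma mulF_mono_nil (g : Fpoly K n) : mulF (monoF [::]) g = g.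
Proof. apply: functional_extensionality => w; by rewrite mulF_monoL /= take0 drop0 eqxx. Qed.

Lemma pC_same o u : pC o o u = 0%N.
Proof. by rewrite /pC subnn if_same. Qed.

Definition C0 (u : pmon n) : bool := uniq u && (sort (@lek n) u == lpl (d - size u) (WC u)).

Lemma Ccond_same o (u : pmon n) : Ccond o o u = C0 u && (o + size u <= d)%N.
Proof.
rewrite /Ccond /C0 /aC /bC pC_same take0 drop0 lpl_nil /= leqnn subnn /= orbT /=.
case: (uniq u) => //=; case h: (o + size u <= d)%N; rewrite ?andbF ?andbT //.
suff -> : (o + 0 + eC o u)%N = (d - size u)%N by [].
rewrite /eC; lia.
Qed.

Variables (r : nat) (delta : 'I_r -> nat) (M : Fvec K n r -> Prop).
Hypothesis HM : graded_right_submodule I delta M.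

Lemma homvec_zero : homvecF delta d (@vzero K (word n) r).
Proof. by move=> i w; rewrite /vzero /fzero eqxx. Qed.
Lemma homvec_add (m1 m2 : Fvec K n r) : homvecF delta d m1 -> homvecF delta d m2 -> homvecF delta d (vadd m1 m2).
Proof.
move=> h1 h2 i w; rewrite /vadd /fadd; case: (eqVneq (m1 i w) 0) => [->|/h1 //].
rewrite add0r; exact: h2.
Qed.
Lemma homvec_scale c (m : Fvec K n r) : homvecF delta d m -> homvecF delta d (vscale c m).
Proof.
move=> h i w; rewrite /vscale /fscale; case: (eqVneq (m i w) 0) => [->|/h //].
by rewrite mulr0 eqxx.
Qed.
Lemma homvec_hvec (m : Fvec K n r) : homvecF delta d (hvecF delta d m).
Proof. move=> i w; rewrite /hvecF; case: ifP => [/eqP //|_]; by rewrite eqxx. Qed.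
Lemma size_WC (u : pmon n) : size (WC u) = size u.
Proof. by rewrite /WC size_map size_sort. Qed.

Lemma piLbase u (m0 : Fvec K n r) : M m0 -> exists m, M m /\ homvecF delta d m /\
  (fun i => piP (delta i) (mulmon u (iota_vec delta m0 i))) = iota_vec delta m.
Proof.
move=> Mm0.
exists (if C0 u then hvecF delta d (fun i => mulF (m0 i) (monoF (WC u))) else @vzero K (word n) r).
split; [|split].
- case: (C0 u); last exact: (gm_zero HM).
  apply: (gm_graded HM); exact: (gm_rmul HM (monoF_poly _) Mm0).
- case: (C0 u); [exact: homvec_hvec | exact: homvec_zero].
apply: functional_extensionality => i; rewrite /iota_vec.
change (piP (delta i) (mulmon u (sig (delta i) (m0 i))) =
  sig (delta i) ((if C0 u then hvecF delta d (fun i => mulF (m0 i) (monoF (WC u))) else @vzero K (word n) r) i)).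
rewrite pi_pull -pull_pi; congr (sig _ _); apply: functional_extensionality => w.
rewrite core Ccond_same /aC /bC pC_same take0 drop0 mulF_mono_nil.
case: (C0 u) => /=; last by rewrite andbF.
rewrite /hvecF; case h1: (size w + delta i == d)%N => //=.
case: ifP => // h2.
rewrite mulF_monoR size_WC.
have -> : (size w - size u = 0)%N by move/eqP: h1 => h1; move/negbT: h2; rewrite -ltnNge; lia.
rewrite drop0; case: eqP => // ew.
have h1' : (size w + delta i = d)%N by apply/eqP.
have hs : size w = size u by rewrite ew size_WC.
move/negbT: h2; rewrite -ltnNge; lia.
Qed.
Lemma Llemma (g : Pvec K n r) : Lpre I delta M g -> forall u, exists m, M m /\ homvecF delta d m /\
  (fun i => piP (delta i) (mulmon u (g i))) = iota_vec delta m.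
Proof.
elim => {g}.
- move=> g [[m0 [Mm0 ->]] | Jg] u; first exact: piLbase.
  have H : forall i, exists x, Ihom (delta i) x /\ piP (delta i) (mulmon u (g i)) = sig (delta i) x
    := fun i => Jlemma (Jg i) (delta i) u.
  pose x := fun i => proj1_sig (constructive_indefinite_description _ (H i)).
  have hx : forall i, Ihom (delta i) (x i) /\ piP (delta i) (mulmon u (g i)) = sig (delta i) (x i)
    := fun i => proj2_sig (constructive_indefinite_description _ (H i)).
  exists x; split; first by apply: (gm_satI HM) => i; case: (hx i) => [[]].
  split; first by move=> i w; case: (hx i) => [[_ h] _]; exact: h.
  by apply: functional_extensionality => i; case: (hx i) => _ ->.
- move=> u; exists (@vzero K (word n) r); split; first exact: (gm_zero HM).
  split; first exact: homvec_zero.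
  apply: functional_extensionality => i; rewrite /vzero mulmon_zero piP_zero.
  exact: (esym (sig_zero (delta i))).
- move=> g h _ IHg _ IHh u.
  have [m1 [M1 [H1 E1]]] := IHg u; have [m2 [M2 [H2 E2]]] := IHh u.
  exists (vadd m1 m2); split; first exact: (gm_add HM).
  split; first exact: homvec_add.
  apply: functional_extensionality => i.
  have e1 := congr1 (fun F => F i) E1; have e2 := congr1 (fun F => F i) E2; simpl in e1, e2.
  rewrite /vadd mulmon_add piP_add e1 e2.
  exact: (esym (sig_add (delta i) (m1 i) (m2 i))).
- move=> c g _ IH u.
  have [m1 [M1 [H1 E1]]] := IH u.
  exists (vscale c m1); split; first exact: (gm_scale HM).
  split; first exact: homvec_scale.
  apply: functional_extensionality => i.
  have e1 := congr1 (fun F => F i) E1; simpl in e1.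
  rewrite /vscale mulmon_scale piP_scale e1.
  exact: (esym (sig_scale (delta i) c (m1 i))).
- move=> v g _ _ IH u.
  have E : (fun i => piP (delta i) (mulmon u (xmul v (g i)))) =
           (fun i => piP (delta i) (mulmon (rcons u v) (g i))).
    by apply: functional_extensionality => i; rewrite mulmon_rcons.
  rewrite E; exact: IH.
Qed.
Ltac nlia := try (unfold pvar, pmon, word in * ); simpl in *; lia.
Definition hpartP (e : nat) (f : Ppoly K n) : Ppoly K n := fun t => if size t == e then f t else 0.

Lemma Jgraded f : Jpre I f -> forall e, Jpre I (hpartP e f).
Proof.
elim => {f}.
- move=> f0 [[i [k [j [j0 ->]]]] | [k [g [Ig ->]]]] e.
    set f := xmul (i, j) (xmul (k, j) (mono K [::])).
    have sz : forall t, f t != 0 -> size t = 2%N.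
      move=> t; rewrite /f /xmul; case: ifP => [/andP[_ it]|]; last by rewrite eqxx.
      case: ifP => [/andP[_ kt]|]; last by rewrite eqxx.
      rewrite /mono; case: (rem (k, j) (rem (i, j) t) =P [::]) => [h _|]; last by rewrite eqxx.
      have h1 : size (rem (i, j) t) = (size t).-1 := size_rem it.
      have h2 : size (rem (k, j) (rem (i, j) t)) = (size (rem (i, j) t)).-1 := size_rem kt.
      have p1 : (0 < size t)%N by case: (t) it.
      have p2 : (0 < size (rem (i, j) t))%N by case: (rem (i, j) t) kt.
      rewrite h /= in h2; nlia.
    case: (eqVneq e 2%N) => [->|ne].
      have -> : hpartP 2 f = f.
        apply: functional_extensionality => t; rewrite /hpartP; case: eqP => // ne2.
        by case: (eqVneq (f t) 0) => // /sz.
      by apply: ig_base; left; exists i, k, j.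
    have -> : hpartP e f = @fzero K (pmon n).
      apply: functional_extensionality => t; rewrite /hpartP /fzero; case: eqP => // h.
      case: (eqVneq (f t) 0) => // /sz; lia.
    exact: ig_zero.
  have -> : hpartP e (iter k (@sigmaP K n) (iotaF g)) = sig k (hpartF e g).
    apply: functional_extensionality => t; rewrite /hpartP /hpartF.
    change ((if size t == e then sig k g t else 0) = sig k (hpartF e g) t).
    rewrite !sigE /hpartF size_map; by case: ifP; case: ifP.
  apply: ig_base; right; exists k, (hpartF e g); split => //; exact: (gi_graded HI).
- move=> e; have -> : hpartP e (@fzero K (pmon n)) = @fzero K (pmon n).
    by apply: functional_extensionality => t; rewrite /hpartP /fzero; case: ifP.
  exact: ig_zero.
- move=> f g _ IHf _ IHg e.
  have -> : hpartP e (fadd f g) = fadd (hpartP e f) (hpartP e g).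
    apply: functional_extensionality => t; rewrite /hpartP /fadd; case: ifP => //; by rewrite addr0.
  exact: ig_add (IHf e) (IHg e).
- move=> c f _ IH e.
  have -> : hpartP e (fscale c f) = fscale c (hpartP e f).
    apply: functional_extensionality => t; rewrite /hpartP /fscale; case: ifP => //; by rewrite mulr0.
  exact: ig_scale (IH e).
- move=> v f v0 _ IH [|e].
    have -> : hpartP 0 (xmul v f) = @fzero K (pmon n).
      apply: functional_extensionality => t; rewrite /hpartP /fzero /xmul.
      case: eqP => // /eqP; rewrite size_eq0 => /eqP ->; by rewrite andbF.
    exact: ig_zero.
  have -> : hpartP e.+1 (xmul v f) = xmul v (hpartP e f).
    apply: functional_extensionality => t; rewrite /hpartP /xmul.
    case: (boolP (validP t && (v \in t))) => [/andP[_ vt]|_]; last by case: ifP.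
    rewrite size_rem //; have : (0 < size t)%N by case: (t) vt.
    by case: (size t) => [|s] //=.
  exact: ig_xmul v0 (IH e).
Qed.
Lemma not_uniq_map (T1 : eqType) (T2 : eqType) (f : T1 -> T2) (s : seq T1) :
  ~~ uniq (map f s) -> exists x y, [/\ x \in s, y \in rem x s & f x = f y].
Proof.
elim: s => [|z s IH] //=; rewrite negb_and negbK => /orP[/mapP[y ys fy]|/IH[x [y [xs ys fxy]]]].
  exists z, y; split => //; [exact: mem_head | by rewrite /= eqxx].
exists x, y; split => //; first by rewrite in_cons xs orbT.
by rewrite /=; case: eqP => _; [exact: mem_rem ys | rewrite in_cons ys orbT].
Qed.

Lemma Jmulmon u f : all (fun p : pvar n => 0 < p.2)%N u -> Jpre I f -> Jpre I (mulmon u f).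
Proof.
elim: u => [|v u IH] //= /andP[v0 hu] Jf; exact: ig_xmul v0 (IH hu Jf).
Qed.

Lemma mono_bad (t : pmon n) : validP t -> ~~ uniq (map snd t) -> Jpre I (mono K t).
Proof.
move=> vt /not_uniq_map[a [b [ain bt eab]]].
set u := rem b (rem a t).
have pt : perm_eq t (u ++ [:: a; b]).
  rewrite perm_sym perm_catC /= perm_sym; apply: perm_trans (perm_to_rem ain) _.
  rewrite perm_cons; exact: perm_to_rem bt.
have -> : mono K t = mulmon (u ++ [:: a; b]) (mono K [::]).
  apply: functional_extensionality => t'.
  case vt': (validP t'); last first.
    rewrite mulmon_invalid ?vt' //; last by case: (u).
    rewrite /mono; case: eqP => // e; by rewrite e vt in vt'.
  rewrite mulmonE // /mono.
  have key : (t' == t) = (msub (u ++ [:: a; b]) t' == Some [::]).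
    apply/eqP/eqP => [->|/msub_nil h]; first by apply/msub_nil.
    apply: (sorted_eq lek_trans lek_anti); [by case/andP: vt' | by case/andP: vt |].
    by apply: perm_trans h _; rewrite perm_sym.
  by rewrite key; case: (msub _ _) => [s|] //=.
rewrite mulmon_cat; apply: Jmulmon.
  apply/allP => x xu; have xt : x \in t by apply: (mem_rem (mem_rem xu)).
  by case/andP: vt => _ /allP; apply.
apply: ig_base; left; exists a.1, b.1, a.2; split.
  have : a \in t := ain; case/andP: vt => _ /allP h /h //.
by rewrite [in X in xmul _ (xmul X _)]eab -!surjective_pairing.
Qed.
Lemma Jfin (s : seq (pmon n)) (f : Ppoly K n) : (forall t, f t != 0 -> t \in s) ->
  (forall t, f t != 0 -> validP t && ~~ uniq (map snd t)) -> Jpre I f.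
Proof.
elim: s f => [|t0 s IH] f hs hb.
  have -> : f = @fzero K (pmon n).
    apply: functional_extensionality => t; rewrite /fzero.
    by case: (eqVneq (f t) 0) => // /hs.
  exact: ig_zero.
case: (eqVneq (f t0) 0) => [f0|nz].
  apply: (IH f) => // t ft; have := hs t ft; rewrite in_cons; case: eqP => //= e.
  by rewrite e f0 eqxx in ft.
pose f' := fun t => if t == t0 then 0 else f t.
have -> : f = fadd (fscale (f t0) (mono K t0)) f'.
  apply: functional_extensionality => t; rewrite /fadd /fscale /mono /f'.
  by case: eqP => [->|_]; rewrite ?mulr1 ?addr0 // mulr0 add0r.
apply: ig_add.
  apply: ig_scale; case/andP: (hb t0 nz) => vt nu; exact: mono_bad.
apply: IH => [t|t]; rewrite /f'; case: (eqVneq t t0) => [->|ne]; rewrite ?eqxx //= ?(negbTE ne) => ft.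
  by have := hs t ft; rewrite in_cons (negbTE ne).
exact: hb.
Qed.

Lemma pigeon o (t : pmon n) : validP t -> all (fun p : pvar n => (o < p.2 <= d)%N) t ->
  (size t + o)%N = d -> uniq (map snd t) -> lpat o t.
Proof.
move=> /andP[st _] rng sz ut.
have sl : sorted leq (map snd t).
  rewrite sorted_map; apply: sub_sorted st => a b; rewrite /lek /=; lia.
have sl' : sorted ltn (map snd t) by rewrite ltn_sorted_uniq_leq ut sl.
have sub : {subset map snd t <= iota o.+1 (size t)}.
  move=> c /mapP[p pt ->]; rewrite mem_iota; have := allP rng p pt; nlia.
have szi : (size (iota o.+1 (size t)) <= size (map snd t))%N by rewrite size_iota size_map.
have [_ eqm] := uniq_min_size ut sub szi.
have e : map snd t = iota o.+1 (size t).
  apply: (irr_sorted_eq ltn_trans) => //; first by move=> x; rewrite ltnn.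
  exact: iota_ltn_sorted.
apply/eqP; rewrite /lpl size_map -e.
by rewrite -/(unzip1 t) -/(unzip2 t) zip_unzip.
Qed.
Lemma Jsub x y : Jpre I x -> Jpre I y -> Jpre I (fsub x y).
Proof.
move=> Jx Jy; have -> : fsub x y = fadd x (fscale (-1) y).
  by apply: functional_extensionality => t; rewrite /fsub /fadd /fscale mulN1r.
exact: ig_add Jx (ig_scale _ Jy).
Qed.

Lemma Jsig o x : I x -> Jpre I (sig o x).
Proof. move=> Ix; apply: ig_base; right; by exists o, x. Qed.

Lemma Jpi o F : Jpre I F -> Jpre I (piP o F).
Proof.
move=> JF; have [x [[Ix _] e]] := Jlemma JF o [::].
have -> : piP o F = sig o x by rewrite -e.
exact: Jsig.
Qed.

Lemma comp_back o (gi h1 h2 : Ppoly K n) : in_Ksub o d h1 -> Jpre I (fsub gi h1) ->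
  is_Ppoly h2 -> (forall t, h2 t != 0 -> (size t + o)%N = d) -> Jpre I (fsub gi h2) ->
  Jpre I (fsub gi (piP o gi)).
Proof.
move=> [[s1 hs1] k1] JB ph2 hh2 JA.
case: (leqP o d) => od; last first.
  have -> : fsub gi (piP o gi) = fsub gi h2 => //.
  apply: functional_extensionality => t; rewrite /fsub /piP.
  have -> : (size t + o == d)%N = false by apply/negbTE/eqP; lia.
  rewrite andbF; case: (eqVneq (h2 t) 0) => [->//|/hh2]; lia.
set R := hpartP (d - o)%N.
have RA : Jpre I (R (fsub gi h2)) by exact: Jgraded.
have RB : Jpre I (R (fsub gi h1)) by exact: Jgraded.
have JD : Jpre I (fsub h2 (R h1)).
  have -> : fsub h2 (R h1) = fsub (R (fsub gi h1)) (R (fsub gi h2)).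
    apply: functional_extensionality => t; rewrite /fsub /R /hpartP.
    case: eqP => [e|ne]; first by ring.
    case: (eqVneq (h2 t) 0) => [->|/hh2 h]; [by rewrite !subrr | lia].
  exact: Jsub.
have E0 : forall t, fsub (R h1) (piP o (R h1)) t != 0 ->
    [/\ h1 t != 0, size t = (d - o)%N & ~~ (lpat o t && (size t + o == d)%N)].
  move=> t; rewrite /fsub /R /hpartP /piP.
  case: (size t =P (d - o)%N) => [st|nst]; last by rewrite if_same subrr eqxx.
  case: ifP => hl; first by rewrite subrr eqxx.
  by rewrite subr0 => h; split.
have JE : Jpre I (fsub (R h1) (piP o (R h1))).
  apply: (@Jfin s1) => t /E0 [h1t st hl].
    by case/andP: (hs1 t h1t).
  have /andP[_ vt] := hs1 t h1t.
  rewrite vt /=; apply/negP => ut.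
  have lt : lpat o t.
    apply: pigeon => //; [exact: k1 | nlia].
  move: hl; rewrite lt /=; case: eqP => //; nlia.
have -> : fsub gi (piP o gi) =
  fadd (fadd (fsub (fsub gi h2) (piP o (fsub gi h2)))
             (fsub (fsub h2 (R h1)) (piP o (fsub h2 (R h1)))))
       (fsub (R h1) (piP o (R h1))).
  apply: functional_extensionality => t; rewrite /fsub /fadd /piP.
  by case: ifP => _; ring.
apply: ig_add => //; apply: ig_add; apply: Jsub => //; exact: Jpi.
Qed.
Lemma sig_supp o x t : sig o x t != 0 -> exists w, t = lpl o w /\ x w != 0.
Proof.
rewrite sigE; case: ifP => [/lpatP[w ->] | _]; last by rewrite eqxx.
by rewrite map_fst_lpl => h; exists w.
Qed.

Lemma sig_poly o x : is_Fpoly x -> is_Ppoly (sig o x).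
Proof.
move=> [s hs]; exists (map (lpl o) s) => t /sig_supp [w [-> xw]].
rewrite valid_lpl andbT; apply/mapP; exists w => //.
by case/andP: (hs w xw).
Qed.

Lemma all_lpl_range o w : all (fun p : pvar n => (o < p.2 <= o + size w)%N) (lpl o w).
Proof.
apply/allP => p pin; have : p.2 \in map snd (lpl o w) by apply/mapP; exists p.
by rewrite map_snd_lpl mem_iota; nlia.
Qed.

Lemma part1 (g : Pvec K n r) : iotaMd_pre I delta M d g <-> Mpd_pre I delta M d g.
Proof.
split.
  move=> [m [Mm [hm Jg]]]; split; [|split].
  - have -> : g = vadd (iota_vec delta m) (vsub g (iota_vec delta m)).
      apply: functional_extensionality => i; apply: functional_extensionality => t.
      by rewrite /vadd /vsub /fadd /fsub; ring.
    apply: sg_add; apply: sg_base; [left; by exists m | by right].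
  - exists (iota_vec delta m); split => // i.
    change (in_Ksub (delta i) d (sig (delta i) (m i))); split.
      exact: sig_poly (gm_poly HM Mm i).
    move=> t /sig_supp [w [-> xw]].
    have hw : (size w + delta i)%N = d := hm i w xw.
    apply/allP => p /(allP (all_lpl_range (delta i) w)) /=; nlia.
  - exists (iota_vec delta m); split.
      move=> i; exact: sig_poly (gm_poly HM Mm i).
    split => // i t.
    change (sig (delta i) (m i) t != 0 -> size t + delta i = d).
    move=> /sig_supp [w [-> xw]]; rewrite size_lpl; exact: hm i w xw.
move=> [Lg [[h1 [k1 J1]] [h2 [p2 [hh2 J2]]]]].
have [m [Mm [hm E]]] := Llemma Lg [::].
exists m; split => //; split => // i.
have Ei := congr1 (fun F => F i) E; simpl in Ei.
change (Jpre I (fsub (g i) (iota_vec delta m i))); rewrite -Ei.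
exact: (comp_back (k1 i) (J1 i) (p2 i) (hh2 i) (J2 i)).
Qed.
Definition Tidx := {i : 'I_r & (d - delta i)%N.-tuple 'I_n}.

Lemma fin_bound k (v : 'I_k -> Fvec K n r) : (forall j, homvecF delta d (v j)) ->
  (forall c : 'I_k -> K, lcomb c v = @vzero K (word n) r -> forall j, c j = 0) ->
  (k <= #|{: Tidx}|)%N.
Proof.
move=> hv hind; rewrite leqNgt; apply/negP => hk.
pose A : 'M[K]_(k, #|{: Tidx}|) :=
  \matrix_(j, l) v j (tag (enum_val l)) (tval (tagged (enum_val l))).
have kz : kermx A != 0.
  rewrite -mxrank_eq0 mxrank_ker subn_eq0 -ltnNge; exact: leq_ltn_trans (rank_leq_col A) hk.
have : [exists i, [exists j, kermx A i j != 0]].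
  apply: contraNT kz => /existsPn h; apply/eqP/matrixP => i j; rewrite [RHS]mxE.
  by move: (h i) => /existsPn /(_ j) /negPn /eqP.
case/existsP => i0 /existsP [j0 nz].
pose c := fun j => kermx A i0 j.
have hc : lcomb c v = @vzero K (word n) r.
  apply: functional_extensionality => i; apply: functional_extensionality => w.
  rewrite /lcomb /vzero /fzero.
  case: (eqVneq (size w + delta i)%N d) => [sw|nsw]; last first.
    apply: big1 => j _; case: (eqVneq (v j i w) 0) => [->|/hv h]; first by rewrite mulr0.
    by exfalso; move/eqP: nsw; apply; exact: h.
  have sw' : size w == (d - delta i)%N by apply/eqP; lia.
  pose x : Tidx := Tagged (fun i => (d - delta i)%N.-tuple 'I_n) (Tuple sw').
  have e := congr1 (fun B : 'M[K]_(k, #|{: Tidx}|) => B i0 (enum_rank x)) (mulmx_ker A).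
  move: e; rewrite /= [X in _ = X]mxE [X in X = _]mxE => e.
  apply: (etrans _ e); apply: eq_bigr => j _; by rewrite /A [X in _ = _ * X]mxE enum_rankK.
by move: nz; rewrite -/(c j0) (hind c hc j0) eqxx.
Qed.
Lemma pred_lcomb (T : Type) (P : (T -> K) -> Prop) k (c : 'I_k -> K) (f : 'I_k -> T -> K) :
  P (@fzero K T) -> (forall x y, P x -> P y -> P (fadd x y)) -> (forall a x, P x -> P (fscale a x)) ->
  (forall j, P (f j)) -> P (fun t => \sum_(j < k) c j * f j t).
Proof.
elim: k c f => [|k IH] c f P0 Pa Ps Pf.
  have -> : (fun t => \sum_(j < 0) c j * f j t) = @fzero K T.
    by apply: functional_extensionality => t; rewrite big_ord0.
  exact: P0.
have -> : (fun t => \sum_(j < k.+1) c j * f j t) =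
   fadd (fun t => \sum_(j < k) c (widen_ord (leqnSn k) j) * f (widen_ord (leqnSn k) j) t)
        (fscale (c ord_max) (f ord_max)).
  by apply: functional_extensionality => t; rewrite big_ord_recr.
apply: (Pa); last exact: (Ps _ _ (Pf ord_max)).
by apply: IH => // j; exact: Pf.
Qed.

Lemma Ivec_lcomb k (c : 'I_k -> K) (v : 'I_k -> Fvec K n r) : (forall j, Ivec I (v j)) -> Ivec I (lcomb c v).
Proof.
move=> hv i; apply: (pred_lcomb (P := I)) => //.
- exact: (gi_zero HI). - exact: (gi_add HI). - exact: (gi_scale HI). - by move=> j; exact: hv.
Qed.

Lemma Jvec_lcomb k (c : 'I_k -> K) (v : 'I_k -> Pvec K n r) : (forall j, Jvec I (v j)) -> Jvec I (lcomb c v).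
Proof.
move=> hv i; apply: (pred_lcomb (P := Jpre I)) => //.
- exact: ig_zero. - move=> x y; exact: ig_add. - move=> a x; exact: ig_scale. - by move=> j; exact: hv.
Qed.

Lemma homvec_lcomb k (c : 'I_k -> K) (v : 'I_k -> Fvec K n r) :
  (forall j, homvecF delta d (v j)) -> homvecF delta d (lcomb c v).
Proof.
move=> hv i w; rewrite /lcomb; case: (eqVneq (size w + delta i)%N d) => [e|ne] //.
rewrite big1 ?eqxx // => j _; case: (eqVneq (v j i w) 0) => [->|/hv h]; first by rewrite mulr0.
by exfalso; move/eqP: ne; apply; exact: h.
Qed.

Lemma max_exists (P : nat -> Prop) N : P 0%N -> (forall k, P k -> (k <= N)%N) ->
  exists k, P k /\ forall k', P k' -> (k' <= k)%N.
Proof.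
elim: N => [|N IH] P0 hb; first by exists 0%N; split => // k' /hb.
case: (classic (P N.+1)) => [h|h]; first by exists N.+1; split.
apply: IH => // k pk; have := hb k pk; rewrite leq_eqVlt => /orP[/eqP e|] //.
by rewrite e in pk.
Qed.
Lemma lcomb_split k (c : 'I_k -> K) (T : Type) (b m0 : 'I_k -> 'I_r -> T -> K) :
  lcomb c b = vadd (lcomb c m0) (lcomb c (fun j => vsub (b j) (m0 j))).
Proof.
apply: functional_extensionality => i; apply: functional_extensionality => t.
rewrite /lcomb /vadd /fadd /vsub /fsub -big_split; apply: eq_bigr => j _ /=; ring.
Qed.

Lemma Ivec_add (x y : Fvec K n r) : Ivec I x -> Ivec I y -> Ivec I (vadd x y).
Proof. move=> hx hy i; exact: (gi_add HI). Qed.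
Lemma Ivec_scale a (x : Fvec K n r) : Ivec I x -> Ivec I (vscale a x).
Proof. move=> hx i; exact: (gi_scale HI). Qed.

Lemma reps k (b : 'I_k -> Fvec K n r) : (forall j, Md_pre I delta M d (b j)) ->
  exists m0 : 'I_k -> Fvec K n r, forall j, M (m0 j) /\ homvecF delta d (m0 j) /\ Ivec I (vsub (b j) (m0 j)).
Proof.
move=> hb; exists (fun j => proj1_sig (constructive_indefinite_description _ (hb j))).
move=> j; exact: (proj2_sig (constructive_indefinite_description _ (hb j))).
Qed.

Lemma basis_exists : exists k, qdim (Md_pre I delta M d) (Ivec I) k.
Proof.
pose P k := exists b : 'I_k -> Fvec K n r, (forall j, Md_pre I delta M d (b j)) /\
  (forall c, Ivec I (lcomb c b) -> forall j, c j = 0).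
have P0 : P 0%N by exists (fun _ => @vzero K (word n) r); split => [[m hm]|c _ [m hm]] //.
have Pb : forall k, P k -> (k <= #|{: Tidx}|)%N.
  move=> k [b [Ub indb]]; have [m0 hm0] := reps Ub.
  apply: (@fin_bound k m0); first by move=> j; case: (hm0 j) => _ [].
  move=> c hc; apply: indb; rewrite (lcomb_split c b m0) hc.
  apply: Ivec_add; first by move=> i; exact: (gi_zero HI).
  by apply: Ivec_lcomb => j; case: (hm0 j) => _ [].
have [k [[b [Ub indb]] kmax]] := max_exists P0 Pb.
exists k, b; split => //; split => // u Uu.
pose b' : 'I_k.+1 -> Fvec K n r := fun j => if insub (val j) is Some j' then b j' else u.
have bw : forall j, b' (widen_ord (leqnSn k) j) = b j.
  move=> j; rewrite /b'; case: insubP => [j' _ ej|] /=; last by rewrite ltn_ord.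
  by congr b; apply: val_inj.
have bm : b' ord_max = u by rewrite /b'; case: insubP => [j' /= |//]; rewrite ltnn.
have nP : ~ P k.+1 by move=> /kmax; rewrite ltnn.
have [c [Ic [j nz]]] : exists c, Ivec I (lcomb c b') /\ exists j, c j <> 0.
  apply: NNPP => h; apply: nP; exists b'; split.
    move=> j; rewrite /b'; case: insubP => [j' _ _|_] //.
  move=> c Ic j; apply: NNPP => nz; apply: h; exists c; split => //; by exists j.
have split' : lcomb c b' = vadd (lcomb (fun j => c (widen_ord (leqnSn k) j)) b) (vscale (c ord_max) u).
  apply: functional_extensionality => i; apply: functional_extensionality => t.
  rewrite /lcomb /vadd /fadd /vscale /fscale big_ord_recr bm /=; congr (_ + _).
  by apply: eq_bigr => l _; rewrite bw.
case: (eqVneq (c ord_max) 0) => [cm|cm].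
  exfalso; apply: nz.
  have hw := indb (fun j => c (widen_ord (leqnSn k) j)).
  have : Ivec I (lcomb (fun j => c (widen_ord (leqnSn k) j)) b).
    have -> : lcomb (fun j => c (widen_ord (leqnSn k) j)) b = lcomb c b'.
      rewrite split'; apply: functional_extensionality => i; apply: functional_extensionality => t.
      by rewrite /vadd /fadd /vscale /fscale cm mul0r addr0.
    exact: Ic.
  move/hw => h0; case: (unliftP ord_max j) => [j'|] ->; last exact: cm.
  by have := h0 j'; rewrite /= (_ : lift ord_max j' = widen_ord (leqnSn k) j') //; apply: val_inj; rewrite /= /bump leqNgt ltn_ord.
exists (fun j => - c (widen_ord (leqnSn k) j) / c ord_max).
have -> : vsub u (lcomb (fun j => - c (widen_ord (leqnSn k) j) / c ord_max) b) =
          vscale (c ord_max)^-1 (lcomb c b').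
  rewrite split'; apply: functional_extensionality => i; apply: functional_extensionality => t.
  rewrite /vsub /fsub /vadd /fadd /vscale /fscale /lcomb mulrDr mulrA mulVf // mul1r addrC.
  rewrite mulr_sumr -sumrN; congr (_ + _); apply: eq_bigr => l _; rewrite mulrA; field.
  done.
exact: Ivec_scale.
Qed.
Lemma iota_lcomb k (c : 'I_k -> K) (m0 : 'I_k -> Fvec K n r) :
  iota_vec delta (lcomb c m0) = lcomb c (fun j => iota_vec delta (m0 j)).
Proof.
apply: functional_extensionality => i; apply: functional_extensionality => t.
change (sig (delta i) (lcomb c m0 i) t = \sum_(j < k) c j * sig (delta i) (m0 j i) t).
rewrite sigE; under eq_bigr do rewrite sigE.
case: ifP => _ //; by rewrite big1 // => j _; rewrite mulr0.
Qed.

Lemma iota_vsub (a b : Fvec K n r) : iota_vec delta (vsub a b) = vsub (iota_vec delta a) (iota_vec delta b).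
Proof.
apply: functional_extensionality => i; apply: functional_extensionality => t.
change (sig (delta i) (fsub (a i) (b i)) t = sig (delta i) (a i) t - sig (delta i) (b i) t).
rewrite !sigE; case: ifP => _ //; by rewrite subr0.
Qed.

Lemma Jvec_iota (m : Fvec K n r) : Ivec I m -> Jvec I (iota_vec delta m).
Proof. move=> hm i; exact: Jsig. Qed.

Lemma iota_inj (m : Fvec K n r) : homvecF delta d m -> Jvec I (iota_vec delta m) -> Ivec I m.
Proof.
move=> hm Jm i; have [x [[Ix _] e]] := Jlemma (Jm i) (delta i) [::].
have e' : sig (delta i) (m i) = sig (delta i) x.
  rewrite -e; apply: functional_extensionality => t; rewrite /piP /=.
  change (sig (delta i) (m i) t = (if lpat (delta i) t && (size t + delta i == d)%N then sig (delta i) (m i) t else 0)).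
  case: ifP => // hl; rewrite sigE; case: ifP => // /lpatP [w ew].
  case: (eqVneq (m i (map fst t)) 0) => // /hm h; move: hl; rewrite ew lpat_lpl size_lpl.
  rewrite ew map_fst_lpl in h; have h' : (size w + delta i)%N = d := h; by rewrite h' eqxx.
have -> : m i = x => //.
apply: functional_extensionality => w.
by have := congr1 (fun F => F (lpl (delta i) w)) e'; rewrite /= !sig_lpl.
Qed.

Lemma transfer k : qdim (Md_pre I delta M d) (Ivec I) k -> qdim (Mpd_pre I delta M d) (Jvec I) k.
Proof.
move=> [b [Ub [indb spb]]]; have [m0 hm0] := reps Ub.
exists (fun j => iota_vec delta (m0 j)); split; [|split].
- move=> j; apply/part1; exists (m0 j); case: (hm0 j) => Mj [hj _]; split => //; split => //.
  have -> : vsub (iota_vec delta (m0 j)) (iota_vec delta (m0 j)) = @vzero K (pmon n) r.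
    apply: functional_extensionality => i; apply: functional_extensionality => t.
    by rewrite /vsub /fsub subrr.
  move=> i; exact: ig_zero.
- move=> c Jc; apply: indb; rewrite (lcomb_split c b m0); apply: Ivec_add.
    apply: iota_inj; first by apply: homvec_lcomb => j; case: (hm0 j) => _ [].
    by rewrite iota_lcomb.
  by apply: Ivec_lcomb => j; case: (hm0 j) => _ [].
move=> g /part1 [m [Mm [hm Jg]]].
have Um : Md_pre I delta M d m.
  exists m; split => //; split => //.
  have -> : vsub m m = @vzero K (word n) r.
    apply: functional_extensionality => i; apply: functional_extensionality => t.
    by rewrite /vsub /fsub subrr.
  move=> i; exact: (gi_zero HI).
have [c Ic] := spb m Um; exists c.
have -> : vsub g (lcomb c (fun j => iota_vec delta (m0 j))) =
    vadd (vsub g (iota_vec delta m)) (iota_vec delta (vsub m (lcomb c m0))).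
  rewrite iota_vsub iota_lcomb.
  apply: functional_extensionality => i; apply: functional_extensionality => t.
  rewrite /vsub /vadd /fsub /fadd; ring.
move=> i; apply: ig_add; first exact: Jg.
apply: Jvec_iota.
have -> : vsub m (lcomb c m0) = vadd (vsub m (lcomb c b)) (lcomb c (fun j => vsub (b j) (m0 j))).
  rewrite (lcomb_split c b m0).
  apply: functional_extensionality => i'; apply: functional_extensionality => t.
  rewrite /vsub /vadd /fsub /fadd; ring.
apply: Ivec_add => //; by apply: Ivec_lcomb => j; case: (hm0 j) => _ [].
Qed.
Lemma main_sec : (forall g, iotaMd_pre I delta M d g <-> Mpd_pre I delta M d g) /\
  (exists k, qdim (Md_pre I delta M d) (Ivec I) k /\ qdim (Mpd_pre I delta M d) (Jvec I) k).
Proof.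
split; first exact: part1.
have [k hk] := basis_exists; exists k; split => //; exact: transfer.
Qed.
End LP.

Theorem mainTheorem8 (K : fieldType) (n r : nat) (delta : 'I_r -> nat)
    (I : Fpoly K n -> Prop) (HI : graded_twosided_ideal I)
    (M : Fvec K n r -> Prop) (HM : graded_right_submodule I delta M)
    (d : nat) :
  (forall g : Pvec K n r, iotaMd_pre I delta M d g <-> Mpd_pre I delta M d g) /\
  (exists k : nat,
     qdim (Md_pre I delta M d) (Ivec I) k /\
     qdim (Mpd_pre I delta M d) (Jvec I) k).
Proof. exact: (@main_sec K n d I HI r delta M HM). Qed.
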